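(* For $1\le p<\infty$ and $N\ge1$, let $F_p:(\mathbb{R}^N\setminus\{0\})\times\mathbb{S}(N)\to\mathbb{R}$, $$F_p(\nu,X)=-|\nu|^{p-2}\Big[\operatorname{tr}X+(p-2)\Big\langle X\frac{\nu}{|\nu|},\frac{\nu}{|\nu|}\Big\rangle\Big],$$ regarded as a function on $\mathcal{D}=\Omega\times\mathbb{R}\times(\mathbb{R}^N\setminus\{0\})\times\mathbb{S}(N)$ independent of the $x$ and $u$ variables. Then $F_p$ belongs to Class M if and only if $p\in(1,\infty)$.
   Context: $\mathbb{S}(N)$ is the space of real symmetric $N\times N$ matrices with the Löwner order; $\lambda_1(X)\le\dots\le\lambda_N(X)$ are the eigenvalues of $X$. Class M (for $F:\mathcal{D}\to\mathbb{R}$, $\mathcal{D}\subseteq\Omega\times\mathbb{R}\times\mathbb{R}^N\times\mathbb{S}(N)$): $F$ is continuous in its matrix entry, and for every $\omega$ and sets $\mathcal{S}_1,\mathcal{S}_2\subseteq\mathbb{S}(N)$ with $\{\omega\}\times\mathcal{S}_i\subseteq\mathcal{D}$, there exist $g_i:\mathbb{R}\times\mathcal{S}_i\to\mathbb{R}$ (possibly depending on $\omega$) such that: (1) for each fixed $M_0\in\mathcal{S}_i$, $t\mapsto g_i(t,M_0)$ is an increasing bijection $\mathbb{R}\to\mathbb{R}$, with inverse $s\mapsto g_i(-,M_0)^{-1}(s)$; (2) $M\mapsto g_i(-,M)^{-1}(0)$ is continuous on $\mathcal{S}_i$; (3) for $M\in\mathcal{S}_1$, if $(\omega,X)\in\mathcal{D}$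 and $X\le M$ then $-F(\omega,X)\le g_1(\lambda_1(X),M)$; (4) for $M\in\mathcal{S}_2$, if $(\omega,Y)\in\mathcal{D}$ and $-Y\le M$ then $-F(\omega,Y)\ge g_2(\lambda_N(Y),M)$. *)

(* Defs.v *)
From HB Require Import structures.
From mathcomp Require Import all_boot all_order all_algebra.
From mathcomp Require Import all_classical all_reals all_analysis.
Set Implicit Arguments. Unset Strict Implicit. Unset Printing Implicit Defensive.
Import Order.TTheory GRing.Theory Num.Theory.
Import numFieldNormedType.Exports.
Local Open Scope classical_set_scope.
Local Open Scope ring_scope.

Definition symmx {R : realType} {N : nat} (X : 'M[R]_N) : Prop := X^T = X.

Definition loewner_le {R : realType} {N : nat} (X M : 'M[R]_N) : Prop :=
  forall v : 'cV[R]_N, 0 <= (v^T *m (M - X) *m v) ord0 ord0.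

Definition lam_min {R : realType} {N : nat} (X : 'M[R]_N) : R :=
  inf [set a : R | eigenvalue X a].
Definition lam_max {R : realType} {N : nat} (X : 'M[R]_N) : R :=
  sup [set a : R | eigenvalue X a].

(* Class M for F : W -> S(N) -> R, defined on the domain D ⊆ W × S(N),
   where W plays the role of Ω × R × R^N (the variable ω). *)
Definition classM {R : realType} {N : nat} {W : Type}
  (D : W -> 'M[R]_N -> Prop) (F : W -> 'M[R]_N -> R) : Prop :=
  (forall w, {within [set X | D w X], continuous (F w)}) /\
  (forall (w : W) (S1 S2 : set 'M[R]_N),
     (forall X, S1 X -> symmx X) -> (forall X, S2 X -> symmx X) ->
     (forall X, S1 X -> D w X) -> (forall X, S2 X -> D w X) ->
     exists (g1 g2 : R -> 'M[R]_N -> R) (h1 h2 : 'M[R]_N -> R),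
       (forall M0, S1 M0 -> {homo g1^~ M0 : s t / s < t} /\ bijective (g1^~ M0)) /\
       (forall M0, S2 M0 -> {homo g2^~ M0 : s t / s < t} /\ bijective (g2^~ M0)) /\
       (forall M, S1 M -> g1 (h1 M) M = 0) /\ {within S1, continuous h1} /\
       (forall M, S2 M -> g2 (h2 M) M = 0) /\ {within S2, continuous h2} /\
       (forall M X, S1 M -> D w X -> loewner_le X M ->
          - F w X <= g1 (lam_min X) M) /\
       (forall M Y, S2 M -> D w Y -> loewner_le (- Y) M ->
          - F w Y >= g2 (lam_max Y) M)).

Definition vnorm {R : realType} {N : nat} (v : 'cV[R]_N) : R :=
  Num.sqrt ((v^T *m v) ord0 ord0).

Definition Fp {R : realType} {N : nat} (p : R) (nu : 'cV[R]_N) (X : 'M[R]_N) : R :=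
  - (vnorm nu `^ (p - 2)) *
    (\tr X + (p - 2) * ((nu^T *m X *m nu) ord0 ord0 / (vnorm nu ^+ 2))).

(* ω = (x, u, ν) ∈ R^N × R × R^N; domain Ω × R × (R^N \ {0}) × S(N) *)
Definition DFp {R : realType} {N : nat} (Omega : set 'cV[R]_N)
  (w : 'cV[R]_N * R * 'cV[R]_N) (X : 'M[R]_N) : Prop :=
  Omega w.1.1 /\ w.2 != 0 /\ symmx X.

Definition Fp_full {R : realType} {N : nat} (p : R)
  (w : 'cV[R]_N * R * 'cV[R]_N) (X : 'M[R]_N) : R := Fp p w.2 X.

(* Main.v *)
Require Import Defs.
From HB Require Import structures.
From mathcomp Require Import all_boot all_order all_algebra.
From mathcomp Require Import all_classical all_reals all_analysis.
From mathcomp Require Import ring lra.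
Set Implicit Arguments. Unset Strict Implicit. Unset Printing Implicit Defensive.
Import Order.TTheory GRing.Theory Num.Theory.
Import numFieldNormedType.Exports.
Local Open Scope classical_set_scope.
Local Open Scope ring_scope.
Section Aux.
Variable R : realType.

Lemma sum_cont (T : topologicalType) (I : Type) (r : seq I) (P : pred I)
  (F : I -> T -> R) :
  (forall i, continuous (F i)) -> continuous (fun x => \sum_(i <- r | P i) F i x).
Proof.
move=> hF; elim: r => [|i r IH].
  have -> : (fun x => \sum_(i <- [::] | P i) F i x) = (fun=> 0).
    by apply/funext => x; rewrite big_nil.
  move=> x; exact: cst_continuous.
have -> : (fun x => \sum_(j <- i :: r | P j) F j x) =
   (fun x => (if P i then F i x else 0) + \sum_(j <- r | P j) F j x).
  by apply/funext => x; rewrite big_cons; case: (P i) => //; rewrite add0r.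
move=> x; apply: cvgD; last exact: IH.
case: (P i); first exact: hF.
exact: cst_continuous.
Qed.

Lemma quad0 (a b : R) : 0 <= b -> (forall t, 0 <= 2 * t * a + t ^+ 2 * b) -> a = 0.
Proof.
move=> b0 H.
set d := b + 1.
have d0 : 0 < d by rewrite /d; lra.
have := H (- a / d).
set i := d^-1.
have di : d * i = 1 by rewrite /i mulfV // gt_eqF.
have i0 : 0 < i by rewrite /i invr_gt0.
move=> h.
have h2 : 0 <= d ^+ 2 * (2 * (- a / d) * a + (- a / d) ^+ 2 * b).
  by apply: mulr_ge0 => //; rewrite sqr_ge0.
have e : d ^+ 2 * (2 * (- a / d) * a + (- a / d) ^+ 2 * b) = - a ^+ 2 * (b + 2).
  rewrite /d; field; rewrite -/d gt_eqF //.
rewrite e in h2.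
have : a ^+ 2 <= 0 by nra.
by move=> ha; apply/eqP; rewrite -sqrf_eq0 eq_le ha sqr_ge0.
Qed.

Lemma mul_cont (T : topologicalType) (f g : T -> R) :
  continuous f -> continuous g -> continuous (fun x => f x * g x).
Proof. by move=> hf hg x; apply: continuousM; [exact: hf|exact: hg]. Qed.

Lemma add_cont (T : topologicalType) (f g : T -> R) :
  continuous f -> continuous g -> continuous (fun x => f x + g x).
Proof. by move=> hf hg x; apply: continuousD; [exact: hf|exact: hg]. Qed.

Lemma opp_cont (T : topologicalType) (f : T -> R) :
  continuous f -> continuous (fun x => - f x).
Proof. by move=> hf x; apply: continuousN; exact: hf. Qed.

Lemma const_cont (T : topologicalType) (a : R) : continuous (fun _ : T => a).
Proof. by move=> x; exact: cst_continuous. Qed.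

End Aux.

Section Mx.
Variable R : realType.
Variable n : nat.
Implicit Types (X : 'M[R]_n) (u v c : 'rV[R]_n).

Definition rq X v := (v *m X *m v^T) ord0 ord0.
Definition rn v := (v *m v^T) ord0 ord0.

Lemma rn_sum v : rn v = \sum_j v ord0 j ^+ 2.
Proof. by rewrite /rn mxE; apply: eq_bigr => j _; rewrite mxE. Qed.

Lemma rq_sum X v : rq X v = \sum_j (\sum_k v ord0 k * X k j) * v ord0 j.
Proof. by rewrite /rq mxE; apply: eq_bigr => j _; rewrite !mxE. Qed.

Lemma rn_ge0 v : 0 <= rn v.
Proof. by rewrite rn_sum; apply: sumr_ge0 => j _; rewrite sqr_ge0. Qed.

Lemma coord_le_rn v j : v ord0 j ^+ 2 <= rn v.
Proof.
rewrite rn_sum (bigD1 j) //= lerDl; apply: sumr_ge0 => i _; exact: sqr_ge0.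
Qed.

Lemma rn_eq0 v : rn v = 0 -> v = 0.
Proof.
move=> h; apply/matrixP => i j; rewrite mxE (ord1 i).
have := coord_le_rn v j; rewrite h => hj.
by apply/eqP; rewrite -sqrf_eq0 eq_le hj sqr_ge0.
Qed.

Lemma rq0 X : rq X 0 = 0.
Proof. by rewrite /rq mul0mx mul0mx mxE. Qed.

Lemma bf_expand X c u t :
  ((c + t *: u) *m X *m (c + t *: u)^T) ord0 ord0 =
  (c *m X *m c^T) ord0 ord0 + t * (c *m X *m u^T) ord0 ord0
  + t * (u *m X *m c^T) ord0 ord0 + t ^+ 2 * (u *m X *m u^T) ord0 ord0.
Proof.
rewrite linearD linearZ /= !mulmxDl !mulmxDr -!scalemxAl -!scalemxAr.
rewrite !mxE; ring.
Qed.

Lemma bf_sym X u c : X^T = X ->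
  (u *m X *m c^T) ord0 ord0 = (c *m X *m u^T) ord0 ord0.
Proof.
move=> sX; transitivity ((u *m X *m c^T)^T ord0 ord0); first by rewrite [RHS]mxE.
by rewrite !trmx_mul trmxK sX mulmxA.
Qed.

Lemma rqZ X a v : rq X (a *: v) = a ^+ 2 * rq X v.
Proof.
rewrite /rq linearZ /= -scalemxAl -scalemxAl -scalemxAr !mxE; ring.
Qed.

Lemma rnZ a v : rn (a *: v) = a ^+ 2 * rn v.
Proof.
rewrite /rn linearZ /= -scalemxAl -scalemxAr !mxE; ring.
Qed.

Lemma rn_cont : continuous rn.
Proof.
have -> : rn = fun v => \sum_j v ord0 j * v ord0 j.
  by apply/funext => v; rewrite rn_sum; apply: eq_bigr => j _; rewrite expr2.
apply: sum_cont => j; apply: mul_cont; exact: coord_continuous.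
Qed.

Lemma rq_cont X : continuous (rq X).
Proof.
have -> : rq X = fun v => \sum_j (\sum_k v ord0 k * X k j) * v ord0 j.
  by apply/funext => v; rewrite rq_sum.
apply: sum_cont => j; apply: mul_cont; last exact: coord_continuous.
apply: sum_cont => k; apply: mul_cont; first exact: coord_continuous.
exact: const_cont.
Qed.

End Mx.

Section Ray.
Variable R : realType.
Variable n : nat.

Lemma rayleigh (X : 'M[R]_n) : (0 < n)%N -> X^T = X ->
  exists c : 'rV[R]_n,
    [/\ rn c = 1, c *m X = rq X c *: c & forall u, rq X c * rn u <= rq X u].
Proof.
move=> n0 sX.
pose S := [set v : 'rV[R]_n | rn v = 1].
have S0 : S !=set0.
  exists (delta_mx ord0 (Ordinal n0)); rewrite /S /= /rn trmx_delta mul_delta_mx.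
  by rewrite mxE !eqxx.
have clS : closed S.
  have -> : S = (@rn R n) @^-1` [set x | x = 1] by [].
  apply: preimage_closed; last exact: closed_eq.
  by move=> x _; apply: rn_cont.
have cS : compact S.
  apply: (subclosed_compact clS
    (@rV_compact _ n (fun=> `[(-1 : R), 1]%classic) (fun=> @segment_compact R (-1) 1))).
  move=> v Sv i /=; rewrite in_itv /= -ler_norml.
  have := coord_le_rn v i; rewrite Sv => h.
  by rewrite -(expr_le1 (n := 2)) // real_normK ?num_real.
have [c cS' cmin] := compact_EVT_min S0 cS (continuous_subspaceT (A:=S) (@rq_cont R n X)).
have c1 : rn c = 1 by move: cS'; rewrite inE.
set m := rq X c.
have Hmin : forall u, m * rn u <= rq X u.
  move=> u.
  have [/rn_eq0 ->|nz] := eqVneq (rn u) 0.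
    by rewrite rq0 /rn mul0mx mxE mulr0.
  have pos : 0 < rn u by rewrite lt_def nz rn_ge0.
  set r := Num.sqrt (rn u).
  have r0 : 0 < r by rewrite sqrtr_gt0.
  have r2 : r ^+ 2 = rn u by rewrite sqr_sqrtr // rn_ge0.
  have Su : (r^-1 *: u) \in S.
    by rewrite inE /S /= rnZ exprVn r2 mulVf.
  have := cmin _ Su; rewrite -/m rqZ exprVn r2 => h.
  apply: le_trans (ler_wpM2r (ltW pos) h) _.
  by rewrite mulrAC mulVf // mul1r.
exists c; split => //.
have key : forall u : 'rV[R]_n, (c *m X *m u^T) ord0 ord0 = m * (c *m u^T) ord0 ord0.
  move=> u; apply: subr0_eq.
  apply: (@quad0 _ _ (rq X u - m * rn u)); first by rewrite subr_ge0 Hmin.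
  move=> t; have := Hmin (c + t *: u).
  rewrite /rq /rn bf_expand (bf_sym _ _ sX).
  have := bf_expand 1%:M c u t; rewrite !mulmx1 => ->.
  rewrite (_ : (u *m c^T) ord0 ord0 = (c *m u^T) ord0 ord0); last first.
    by have := bf_sym c u (@trmx1 R n); rewrite !mulmx1.
  rewrite -/(rq X c) -/m -/(rn c) c1 -/(rq X u) -/(rn u) => h.
  nra.
set z := c *m X - m *: c.
have : rn z = 0.
  rewrite /rn {1}/z mulmxBl -scalemxAl.
  have -> : forall (A B : 'M[R]_1), (A - m *: B) ord0 ord0 = A ord0 ord0 - m * B ord0 ord0.
    by move=> A B; rewrite !mxE.
  by rewrite key subrr.
by move/rn_eq0 => /eqP; rewrite subr_eq0 => /eqP.
Qed.

End Ray.

Section Eig.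
Variable R : realType.
Variable n : nat.

Definition qf (X : 'M[R]_n) (v : 'cV[R]_n) := (v^T *m X *m v) ord0 ord0.
Definition cn (v : 'cV[R]_n) := (v^T *m v) ord0 ord0.

Lemma rn_nz (w : 'rV[R]_n) : w != 0 -> 0 < rn w.
Proof.
move=> wn0; rewrite lt_def rn_ge0 andbT; apply/eqP => /rn_eq0 h.
by rewrite h eqxx in wn0.
Qed.

Lemma rq_eig (X : 'M[R]_n) a (w : 'rV[R]_n) : w *m X = a *: w -> rq X w = a * rn w.
Proof. by move=> h; rewrite /rq h -scalemxAl mxE. Qed.

Lemma rqN (X : 'M[R]_n) w : rq (- X) w = - rq X w.
Proof. by rewrite /rq mulmxN mulNmx mxE. Qed.

Lemma nz_of_rn1 (c : 'rV[R]_n) : rn c = 1 -> c != 0.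
Proof. by move=> h; apply/eqP => c0; move: h; rewrite c0 /rn mul0mx mxE => /eqP; rewrite eq_sym oner_eq0. Qed.

Lemma lam_min_prop (X : 'M[R]_n) : (0 < n)%N -> X^T = X ->
  exists v : 'cV[R]_n, cn v = 1 /\ qf X v = lam_min X.
Proof.
move=> n0 sX; have [c [c1 cX cmin]] := rayleigh n0 sX.
set m := rq X c in cX cmin.
have mE : eigenvalue X m by apply/eigenvalueP; exists c => //; exact: nz_of_rn1.
have lb : lbound [set a | eigenvalue X a] m.
  move=> a /= /eigenvalueP [w wX wn0].
  have := cmin w; rewrite (rq_eig wX) => h.
  by rewrite -(ler_pM2r (rn_nz wn0)).
have lmE : lam_min X = m.
  apply/le_anti/andP; split.
    by apply: (ge_inf (ex_intro _ m lb)).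
  by apply: lb_le_inf => //; exists m.
exists c^T; rewrite /cn /qf trmxK lmE; split => //.
Qed.

Lemma lam_max_prop (X : 'M[R]_n) : (0 < n)%N -> X^T = X ->
  (exists v : 'cV[R]_n, cn v = 1 /\ qf X v = lam_max X) /\
  (forall a, eigenvalue X a -> a <= lam_max X).
Proof.
move=> n0 sX.
have sNX : (- X)^T = - X by rewrite linearN /= sX.
have [c [c1 cX cmin]] := rayleigh n0 sNX.
set m := rq (- X) c in cX cmin.
have mE : eigenvalue X (- m).
  apply/eigenvalueP; exists c; last exact: nz_of_rn1.
  by rewrite scaleNr -cX mulmxN opprK.
have ub : ubound [set a | eigenvalue X a] (- m).
  move=> a /= /eigenvalueP [w wX wn0].
  have wNX : w *m (- X) = (- a) *: w by rewrite mulmxN wX scaleNr.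
  have := cmin w; rewrite (rq_eig wNX) => h.
  have : m <= - a by rewrite -(ler_pM2r (rn_nz wn0)).
  by rewrite lerNr.
have lmE : lam_max X = - m.
  apply/le_anti/andP; split.
    by apply: ge_sup => //; exists (- m).
  by apply: (ub_le_sup (ex_intro _ (- m) ub)).
split; last by move=> a ha; rewrite lmE; exact: ub.
exists c^T; rewrite /cn /qf trmxK lmE; split => //.
by rewrite /m rqN opprK.
Qed.

End Eig.

Section Tr.
Variable R : realType.
Variable n : nat.
Implicit Types (P M X : 'M[R]_n) (e v : 'cV[R]_n).

Lemma tr11 (A : 'M[R]_1) : \tr A = A ord0 ord0.
Proof. by rewrite /mxtrace big_ord1. Qed.

Lemma mul11 (A B : 'M[R]_1) : (A *m B) ord0 ord0 = A ord0 ord0 * B ord0 ord0.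
Proof. by rewrite mxE big_ord1. Qed.

Lemma trq P (B : 'M[R]_n) : \tr (B^T *m P *m B) = \sum_i qf P (col i B).
Proof.
rewrite /mxtrace; apply: eq_bigr => i _; rewrite /qf !mxE.
apply: eq_bigr => k _; rewrite !mxE; congr (_ * _).
by apply: eq_bigr => j _; rewrite !mxE.
Qed.

Lemma trBPB P e : 
  let s := cn e in let B := s%:M - e *m e^T in
  \tr (B^T *m P *m B) = s * (s * \tr P - qf P e).
Proof.
move=> s B.
have BT : B^T = B by rewrite /B linearB /= tr_scalar_mx trmx_mul trmxK.
rewrite BT /B mulmxBl mul_scalar_mx mulmxBl.
rewrite !(mulmxDr, mulmxN) mul_mx_scalar mul_mx_scalar -!scalemxAl.
have t1 : \tr (P *m (e *m e^T)) = qf P e.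
  rewrite mulmxA (mxtrace_mulC (P *m e)) tr11 /qf. by rewrite -mulmxA.
have t2 : \tr (e *m e^T *m P) = qf P e.
  by rewrite -mulmxA (mxtrace_mulC e) tr11 /qf.
have t3 : \tr (e *m e^T *m P *m (e *m e^T)) = qf P e * s.
  rewrite -!mulmxA (mxtrace_mulC e) !mulmxA tr11.
  by rewrite -(mulmxA (e^T *m P *m e)) mxE big_ord1.
rewrite !raddfB /= !mxtraceZ t1 t2 t3; ring.
Qed.

End Tr.

Section Bnd.
Variable R : realType.
Variable n : nat.
Implicit Types (P M X : 'M[R]_n) (e v nu : 'cV[R]_n).

Lemma cn_rn v : cn v = rn v^T.
Proof. by rewrite /cn /rn trmxK. Qed.

Lemma cn_ge0 v : 0 <= cn v.
Proof. by rewrite cn_rn rn_ge0. Qed.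

Lemma cn_eq0 v : cn v = 0 -> v = 0.
Proof. by rewrite cn_rn => /rn_eq0 h; rewrite -[v]trmxK h trmx0. Qed.

Lemma coord_le_cn v j : v j ord0 ^+ 2 <= cn v.
Proof. by have := coord_le_rn v^T j; rewrite -cn_rn mxE. Qed.

Lemma sub11 (A B : 'M[R]_1) : (A - B) ord0 ord0 = A ord0 ord0 - B ord0 ord0.
Proof. by rewrite !mxE. Qed.

Lemma qfB M X v : qf (M - X) v = qf M v - qf X v.
Proof. by rewrite /qf mulmxBr mulmxBl sub11. Qed.

Lemma qf0 P : qf P 0 = 0.
Proof. by rewrite /qf trmx0 mul0mx mul0mx mxE. Qed.

Lemma tr_psd P e : (forall v, 0 <= qf P v) -> qf P e <= cn e * \tr P.
Proof.
move=> psd.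
have h0 : 0 <= cn e * (cn e * \tr P - qf P e).
  rewrite -(trBPB P e) trq; apply: sumr_ge0 => i _; exact: psd.
have [/cn_eq0 e0|nz] := eqVneq (cn e) 0.
  by rewrite e0 qf0 /cn trmx0 mul0mx mxE mul0r.
have pos : 0 < cn e by rewrite lt_def nz cn_ge0.
by rewrite -subr_ge0; move: h0; rewrite pmulr_rge0.
Qed.

Definition Kf M := \sum_j \sum_k `|M k j|.

Lemma qf_sum M v : qf M v = \sum_j (\sum_k v k ord0 * M k j) * v j ord0.
Proof. by rewrite /qf mxE; apply: eq_bigr => j _; rewrite !mxE; congr (_ * _); apply: eq_bigr => k _; rewrite mxE. Qed.

Lemma qf_bound M v : cn v = 1 -> - Kf M <= qf M v.
Proof.
move=> v1.
have hv : forall j, `|v j ord0| <= 1.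
  move=> j; have := coord_le_cn v j; rewrite v1 => h.
  by rewrite -(expr_le1 (n := 2)) // real_normK ?num_real.
have : `|qf M v| <= Kf M.
  rewrite qf_sum /Kf.
  apply: le_trans (ler_norm_sum _ _ _) _; apply: ler_sum => j _.
  rewrite normrM; apply: le_trans (ler_wpM2l (normr_ge0 _) (hv j)) _; rewrite mulr1.
  apply: le_trans (ler_norm_sum _ _ _) _; apply: ler_sum => k _.
  rewrite normrM; apply: le_trans (ler_wpM2r (normr_ge0 _) (hv k)) _; rewrite mul1r.
  by [].
by rewrite ler_norml => /andP[].
Qed.

Definition Lf (p : R) nu X := \tr X + (p - 2) * (qf X nu / cn nu).

Lemma Lbound (p c : R) nu X M v : 1 < p -> 0 < c -> c <= 1 -> c <= p - 1 ->
  0 < cn nu -> (forall u, 0 <= qf (M - X) u) -> cn v = 1 ->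
  Lf p nu X <= Lf p nu M + c * Kf M + c * qf X v.
Proof.
move=> p1 c0 c1 cp nu0 psd v1.
set P := M - X.
have hPv : qf P v <= \tr P by have := tr_psd v psd; rewrite v1 mul1r.
have trP0 : 0 <= \tr P by apply: le_trans hPv; exact: psd.
have hPnu : qf P nu <= cn nu * \tr P by exact: tr_psd.
set r := qf P nu / cn nu.
have r0 : 0 <= r by rewrite /r divr_ge0 // ?psd // ltW.
have rt : r <= \tr P by rewrite /r ler_pdivrMr // mulrC.
have LP : c * \tr P <= \tr P + (p - 2) * r.
  have [p2|p2] := lerP p 2.
    have : (p - 2) * \tr P <= (p - 2) * r by rewrite ler_wnM2l // subr_le0.
    have : c * \tr P <= (p - 1) * \tr P by rewrite ler_wpM2r.
    lra.
  have : 0 <= (p - 2) * r by rewrite mulr_ge0 // subr_ge0 ltW.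
  have : c * \tr P <= 1 * \tr P by rewrite ler_wpM2r.
  lra.
have LX : Lf p nu X = Lf p nu M - (\tr P + (p - 2) * r).
  rewrite /Lf /r /P raddfB /= qfB mulrBl; ring.
have qPv : qf P v = qf M v - qf X v by rewrite qfB.
have KM := qf_bound M v1.
have h1 : c * qf P v <= c * \tr P by rewrite ler_wpM2l // ltW.
have h2 : c * (- Kf M) <= c * qf M v by rewrite ler_wpM2l // ltW.
rewrite qPv in h1.
rewrite LX; nra.
Qed.

End Bnd.

Section Main.
Variable R : realType.
Variable n : nat.
Implicit Types (P M X Y : 'M[R]_n) (e v nu : 'cV[R]_n).

Lemma aff_ok (k c a : R) : 0 < k -> 0 < c ->
  {homo (fun t => k * (a + c * t)) : s t / s < t} /\ bijective (fun t => k * (a + c * t)).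
Proof.
move=> k0 c0; split.
  by move=> s t st; rewrite ltr_pM2l // ltrD2l ltr_pM2l.
exists (fun y => (y / k - a) / c) => y /=; field; rewrite ?gt_eqF //.
Qed.

Lemma qfN Y v : qf (- Y) v = - qf Y v.
Proof. by rewrite /qf mulmxN mulNmx mxE. Qed.

Lemma LfN p nu Y : Lf p nu (- Y) = - Lf p nu Y.
Proof. by rewrite /Lf raddfN /= qfN; rewrite mulNr mulrN; ring. Qed.

Lemma tr_cont : continuous (fun X : 'M[R]_n => \tr X).
Proof. by apply: sum_cont => i; exact: coord_continuous. Qed.

Lemma qf_cont nu : continuous (fun X : 'M[R]_n => qf X nu).
Proof.
have -> : (fun X : 'M[R]_n => qf X nu) =
   (fun X => \sum_j (\sum_k nu k ord0 * X k j) * nu j ord0).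
  by apply/funext => X; rewrite qf_sum.
apply: sum_cont => j; apply: mul_cont; last exact: const_cont.
apply: sum_cont => k; apply: mul_cont; first exact: const_cont.
exact: coord_continuous.
Qed.

Lemma Lf_cont p nu : continuous (Lf p nu).
Proof.
apply: add_cont; first exact: tr_cont.
apply: mul_cont; first exact: const_cont.
apply: mul_cont; first exact: qf_cont.
exact: const_cont.
Qed.

Lemma abs_cont (T : topologicalType) (f : T -> R) :
  continuous f -> continuous (fun x => `|f x|).
Proof.
move=> hf x; apply: continuous_comp; first exact: hf.
exact: norm_continuous.
Qed.

Lemma Kf_cont : continuous (@Kf R n).
Proof.
apply: sum_cont => j; apply: sum_cont => k; apply: abs_cont.
exact: coord_continuous.
Qed.

Lemma vnorm2 nu : vnorm nu ^+ 2 = cn nu.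
Proof. by rewrite /vnorm sqr_sqrtr // cn_ge0. Qed.

Lemma Fp_Lf p nu X : Fp p nu X = - (vnorm nu `^ (p - 2)) * Lf p nu X.
Proof. by rewrite /Fp /Lf vnorm2. Qed.

End Main.

Unset Implicit Arguments.

Theorem proposition1 (R : realType) (N : nat) (Omega : set 'cV[R]_N) (p : R) :
  (0 < N)%N -> open Omega -> Omega !=set0 -> 1 <= p ->
  (classM (DFp Omega) (Fp_full p) <-> 1 < p).
Proof.
move=> N0 _ [x0 Ox0] p1; split.
  move=> [_ H].
  rewrite lt_def p1 andbT; apply/negP => /eqP pe; subst p.
  pose i0 := Ordinal N0.
  pose e : 'cV[R]_N := delta_mx i0 ord0.
  have eTe : e^T *m e = 1%:M.
    rewrite trmx_delta mul_delta_mx; apply/matrixP => i j.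
    by rewrite !mxE (ord1 i) (ord1 j).
  have enz : e != 0.
    apply/eqP => h; have := congr1 (fun M : 'cV[R]_N => M i0 ord0) h.
    by rewrite !mxE !eqxx => /eqP; rewrite oner_eq0.
  pose w := (x0, (0:R), e).
  have HH := H w set0 [set 0].
  have s1 : forall X : 'M[R]_N, set0 X -> symmx X by [].
  have s2 : forall X : 'M[R]_N, [set 0] X -> symmx X.
    by move=> X ->; rewrite /symmx trmx0.
  have d1 : forall X, set0 X -> DFp Omega w X by [].
  have d2 : forall X : 'M[R]_N, [set 0] X -> DFp Omega w X.
    by move=> X ->; split => //; split => //; rewrite /symmx trmx0.
  have [g1 [g2 [h1 [h2 [_ [G2 [_ [_ [_ [_ [_ G4]]]]]]]]]]] := HH s1 s2 d1 d2.
  have [mono [ginv gK Kg]] := G2 0 (erefl _).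
  pose s := ginv 1.
  have gs : g2 s 0 = 1 by rewrite /s Kg.
  pose t := `|s| + 1.
  have t0 : 0 < t by rewrite /t ltr_pwDr.
  have st : s < t by rewrite /t (le_lt_trans (ler_norm s)) // ltrDl.
  have gt : 1 < g2 t 0 by rewrite -gs; apply: mono.
  pose Y := t *: (e *m e^T).
  have sY : Y^T = Y by rewrite /Y linearZ /= trmx_mul trmxK.
  have scal11 : forall (a : R) (A : 'M[R]_1), (a *: A) ord0 ord0 = a * A ord0 ord0.
    by move=> a A; rewrite mxE.
  have eig : eigenvalue Y t.
    apply/eigenvalueP; exists e^T.
      by rewrite /Y -scalemxAr mulmxA eTe mul1mx.
    by apply/eqP => h; move/eqP: enz; apply; rewrite -[e]trmxK h trmx0.
  have [_ ub] := lam_max_prop N0 sY.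
  have tl := ub t eig.
  have g_le : g2 t 0 <= g2 (lam_max Y) 0.
    by move: tl; rewrite le_eqVlt => /orP[/eqP <-|/mono/ltW].
  have le : loewner_le (- Y) 0.
    move=> v; rewrite sub0r opprK /Y -scalemxAr -scalemxAl scal11.
    rewrite (_ : v^T *m (e *m e^T) *m v = (v^T *m e) *m (v^T *m e)^T); last first.
      by rewrite trmx_mul trmxK !mulmxA.
    rewrite mxE big_ord1 [(v^T *m e)^T _ _]mxE.
    apply: mulr_ge0; first exact: ltW.
    by rewrite -expr2 sqr_ge0.
  have dY : DFp Omega w Y by split => //; split.
  have := G4 0 Y (erefl _) dY le.
  have cne : cn e = 1 by rewrite /cn eTe mxE.
  have qfe : qf Y e = t.
    rewrite /qf /Y -scalemxAr -scalemxAl scal11.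
    by rewrite mulmxA eTe mul1mx eTe mxE mulr1.
  have tre : \tr Y = t.
    by rewrite /Y mxtraceZ mxtrace_mulC eTe tr11 mxE mulr1.
  rewrite /Fp_full /= Fp_Lf /Lf qfe tre cne divr1.
  rewrite (_ : t + (1 - 2) * t = 0); last by ring.
  rewrite mulr0 oppr0 => h.
  have := le_trans g_le h; lra.
move=> p1'.
have cE : exists c : R, [/\ 0 < c, c <= 1 & c <= p - 1].
  have [p2|p2] := lerP p 2.
    by exists (p - 1); split; rewrite ?subr_gt0 //; lra.
  by exists 1; split => //; lra.
have [c [c0 c1 cp]] := cE.
split.
  move=> w; apply: continuous_subspaceT.
  have -> : Fp_full p w = fun X => - (vnorm w.2 `^ (p - 2)) * Lf p w.2 X.
    by apply/funext => X; rewrite /Fp_full Fp_Lf.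
  apply: mul_cont; first exact: const_cont.
  exact: Lf_cont.
move=> w S1 S2 sS1 sS2 dS1 dS2.
set nu := w.2.
pose k := if nu == 0 then 1 else vnorm nu `^ (p - 2).
have k0 : 0 < k.
  rewrite /k; case: eqP => // /eqP nz; apply: powR_gt0.
  rewrite /vnorm sqrtr_gt0 lt_def cn_ge0 andbT; apply/eqP => /cn_eq0 h.
  by rewrite h eqxx in nz.
pose a M := Lf p nu M + c * Kf M.
exists (fun t M => k * (a M + c * t)), (fun t M => k * (- a M + c * t)).
exists (fun M => - a M / c), (fun M => a M / c).
have ac : continuous a.
  apply: add_cont; first exact: Lf_cont.
  apply: mul_cont; first exact: const_cont.
  exact: Kf_cont.
split; first by move=> M0 _; exact: aff_ok.
split; first by move=> M0 _; exact: aff_ok.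
split; first by move=> M _ /=; rewrite [c * _]mulrC divfK ?gt_eqF // subrr mulr0.
split.
  apply: continuous_subspaceT; apply: mul_cont; last exact: const_cont.
  exact: opp_cont.
split; first by move=> M _ /=; rewrite [c * _]mulrC divfK ?gt_eqF // addNr mulr0.
split.
  apply: continuous_subspaceT; apply: mul_cont; last exact: const_cont.
  exact: ac.
have kE : nu != 0 -> k = vnorm nu `^ (p - 2) by rewrite /k => /negbTE ->.
have cnpos : nu != 0 -> 0 < cn nu.
  by move=> nz; rewrite lt_def cn_ge0 andbT; apply/eqP => /cn_eq0 h; rewrite h eqxx in nz.
split.
  move=> M X SM [_ [nz sX]] le.
  have [v [v1 qv]] := lam_min_prop N0 sX.
  rewrite /Fp_full Fp_Lf -/nu -(kE nz) mulNr opprK.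
  rewrite ler_pM2l //.
  rewrite -qv /a -addrA.
  have := (Lbound p1' c0 c1 cp (cnpos nz) le v1); by rewrite addrA.
move=> M Y SM [_ [nz sY]] le.
have [[v [v1 qv]] _] := lam_max_prop N0 sY.
rewrite /Fp_full Fp_Lf -/nu -(kE nz) mulNr opprK.
rewrite ler_pM2l //.
have le' : forall u, 0 <= qf (M - - Y) u by exact: le.
have := Lbound p1' c0 c1 cp (cnpos nz) le' v1.
rewrite LfN qfN qv /a; lra.
Qed.
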